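(* Let $P\subset\mathbb{R}^d$ be a full-dimensional lattice polytope with facet presentation $P=\{x: n_F(x)\ge -h_F\ \forall F\in\mathcal{F}(P)\}$ and codegree $a$, and suppose $P=\lfloor aP\rfloor+\{P\}$. Then \[\lfloor aP\rfloor=\{x\in\mathbb{R}^d: n_F(x)\ge 1-ah_F \text{ for all } F\in\mathcal{F}(P)\}\] and \[\{P\}=\{x\in\mathbb{R}^d: n_F(x)\ge (a-1)h_F-1 \text{ for all } F\in\mathcal{F}(P)\}.\] In particular, the right-hand sides are lattice polytopes. Furthermore, if $a=1$, then $\{P\}$ is a reflexive polytope.
   Context: $\mathcal{F}(P)$ is the set of facets of $P$; $n_F\in(\mathbb{Z}^d)^*$ is the primitive inner normal of $F$ and $h_F\in\mathbb{Z}$. The codegree is $a=\min\{k\in\mathbb{Z}_{\ge1}: \mathrm{int}(kP)\cap\mathbb{Z}^d\ne\varnothing\}$. For a lattice polytope $Q$, $\lfloor Q\rfloor=\mathrm{conv}(\mathrm{int}(Q)\cap\mathbb{Z}^d)$. The remainder polytope is $\{P\}=\mathrm{conv}\{x\in\mathbb{Z}^d: n_F(x)\ge (a-1)h_F-1\ \forall F\in\mathcal{F}(P)\}$. $+$ is Minkowski sum. The dual of a polytope $Q$ is $Q^*=\{n\in(\mathbb{R}^d)^*: n(x)\ge -1\ \forall x\in Q\}$; $Q$ is reflexive if both $Q$ and $Q^*$ are lattice polytopes (with respect to $\mathbb{Z}^d$ and $(\mathbb{Z}^d)^*$). *)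

(* Defs.v *)
From mathcomp Require Import all_boot all_order all_algebra.
From mathcomp Require Import reals.
Set Implicit Arguments. Unset Strict Implicit. Unset Printing Implicit Defensive.
Import Order.TTheory GRing.Theory Num.Theory.
Local Open Scope ring_scope.

Section Polytopes.
Variables (R : realType) (d : nat).

Definition vec := 'rV[R]_d.
Definition pset := vec -> Prop.

Definition lattice_pt (x : vec) : Prop := forall i, x ord0 i \is a Num.int.

Definition ev (n : 'rV[int]_d) (x : vec) : R := \sum_i (n ord0 i)%:~R * x ord0 i.

Definition evR (u x : vec) : R := \sum_i u ord0 i * x ord0 i.

Definition primitive (n : 'rV[int]_d) : bool := \big[gcdn/0%N]_i `|n ord0 i|%N == 1%N.

Definition conv (S : pset) : pset := fun x =>
  exists (k : nat) (p : 'I_k -> vec) (l : 'I_k -> R),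
    (forall i, S (p i)) /\ (forall i, 0 <= l i) /\ \sum_i l i = 1 /\
    x = \sum_i l i *: p i.

Definition lattice_polytope (P : pset) : Prop :=
  exists V : seq vec, V != [::] /\ (forall v, v \in V -> lattice_pt v) /\
    forall x, P x <-> conv (fun y => y \in V) x.

(* full-dimensional: P contains d+1 affinely independent points *)
Definition full_dim (P : pset) : Prop :=
  exists (x0 : vec) (M : 'M[R]_d), P x0 /\ \rank M = d /\
    forall j, P (x0 + row j M).

(* (n, h) with n primitive defines a facet F = {x in P : n(x) = -h} of P:
   P lies in {n(x) >= -h} and F has affine dimension d-1 *)
Definition is_facet (P : pset) (n : 'rV[int]_d) (h : int) : Prop :=
  primitive n /\ (forall x, P x -> ev n x >= - h%:~R) /\
  exists (x0 : vec) (M : 'M[R]_(d.-1, d)),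
    P x0 /\ ev n x0 = - h%:~R /\ \rank M = d.-1 /\
    forall j, P (x0 + row j M) /\ ev n (x0 + row j M) = - h%:~R.

Definition dil (k : R) (P : pset) : pset := fun x => exists y, P y /\ x = k *: y.

Definition interior_pt (P : pset) (x : vec) : Prop :=
  exists2 e : R, 0 < e & forall y : vec,
    (forall i, `|y ord0 i - x ord0 i| < e) -> P y.

Definition is_codegree (P : pset) (a : nat) : Prop :=
  (1 <= a)%N /\
  (exists x, lattice_pt x /\ interior_pt (dil a%:R P) x) /\
  forall k : nat, (1 <= k)%N -> (k < a)%N ->
    ~ exists x, lattice_pt x /\ interior_pt (dil k%:R P) x.

Definition lfloor (Q : pset) : pset :=
  conv (fun x => lattice_pt x /\ interior_pt Q x).

Definition remainder (P : pset) (a : nat) : pset :=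
  conv (fun x => lattice_pt x /\
    forall n h, is_facet P n h -> ev n x >= (a%:~R - 1) * h%:~R - 1).

Definition msum (A B : pset) : pset :=
  fun x => exists y z, A y /\ B z /\ x = y + z.

Definition dual (Q : pset) : pset := fun u => forall x, Q x -> evR u x >= -1.

Definition reflexive_polytope (Q : pset) : Prop :=
  lattice_polytope Q /\ lattice_polytope (dual Q).

End Polytopes.

(* Main.v *)
Require Import Defs.
From mathcomp Require Import all_boot all_order all_algebra.
From mathcomp Require Import reals.
From mathcomp Require Import boolp.
From mathcomp Require Import ring lra zify.
From Stdlib Require Import Lia.
Import Order.TTheory GRing.Theory Num.Theory.
Local Open Scope ring_scope.
Set Implicit Arguments. Unset Strict Implicit.

Section Gordan.
Variable R : realType.

Lemma sum_delta (I : finType) (i : I) (F : I -> R) :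
  \sum_k ((k == i)%:R * F k) = F i.
Proof.
rewrite (bigD1 i) //= eqxx mul1r big1 ?addr0 // => k /negbTE ->.
by rewrite mul0r.
Qed.

Lemma sep_interval (I : finType) (P Q : pred I) (f g : I -> R) :
  (forall i k, P i -> Q k -> f i < g k) ->
  exists t, (forall i, P i -> f i < t) /\ (forall k, Q k -> t < g k).
Proof.
move=> H.
case: (pickP P) => [i0 Pi0|P0]; case: (pickP Q) => [k0 Qk0|Q0].
- case: (arg_maxP f Pi0) => i Pi Hi; case: (arg_minP g Qk0) => k Qk Hk.
  exists ((f i + g k) / 2); split.
  + move=> j Pj; have h1 : f j <= f i := Hi j Pj; have h2 := H i k Pi Qk; lra.
  + move=> j Qj; have h1 : g k <= g j := Hk j Qj; have h2 := H i k Pi Qk; lra.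
- case: (arg_maxP f Pi0) => i Pi Hi; exists (f i + 1); split.
  + move=> j Pj; have h1 : f j <= f i := Hi j Pj; lra.
  + by move=> j; rewrite Q0.
- case: (arg_minP g Qk0) => k Qk Hk; exists (g k - 1); split.
  + by move=> j; rewrite P0.
  + move=> j Qj; have h1 : g k <= g j := Hk j Qj; lra.
- by exists 0; split => j; rewrite ?P0 ?Q0.
Qed.

Lemma gordan n : forall (I : finType) (A : pred I) (q : I -> 'I_n -> R),
  (forall l : I -> R, (forall i, 0 <= l i) -> (forall i, ~~ A i -> l i = 0) ->
     \sum_i l i = 1 -> exists j, \sum_i l i * q i j != 0) ->
  exists u : 'I_n -> R, forall i, A i -> 0 < \sum_j u j * q i j.
Proof.
elim: n => [|n IH] I A q H.
  exists (fun _ => 0) => i Ai; exfalso.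
  have h1 : forall k, ~~ A k -> (k == i)%:R = 0 :> R.
    by move=> k Ak; case: eqP => // ki; move: Ak; rewrite ki Ai.
  have h2 : \sum_k (k == i)%:R = 1 :> R.
    transitivity (\sum_k ((k == i)%:R * (fun _ => 1 : R) k)).
      by apply: eq_bigr => k _; rewrite mulr1.
    exact: sum_delta.
  have [j _] := H (fun k => (k == i)%:R) (fun k => ler0n _ _) h1 h2.
  by case: j => m; rewrite ltn0.
pose h i := q i ord0.
pose t i j := q i (lift ord0 j).
pose A' (z : (I + (I * I))%type) := match z with
  | inl i => A i && (h i == 0)
  | inr (i, k) => [&& A i, A k, 0 < h i & h k < 0] end.
pose al i k := - h k / (h i - h k).
pose be i k := h i / (h i - h k).
pose q' (z : (I + (I * I))%type) j := match z with
  | inl i => t i j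
  | inr (i, k) => al i k * t i j + be i k * t k j end.
have [u' Hu'] : exists u' : 'I_n -> R, forall z, A' z -> 0 < \sum_j u' j * q' z j.
  apply: IH => l' l'0 l'A l'1.
  case: (pselect (exists j, \sum_i l' i * q' i j != 0)) => // Hn.
  have Hall : forall j, \sum_i l' i * q' i j = 0.
    move=> j; case: (eqVneq (\sum_i l' i * q' i j) 0) => // Hj.
    by exfalso; apply: Hn; exists j.
  pose L i := l' (inl i) + \sum_k l' (inr (i, k)) * al i k
                         + \sum_k l' (inr (k, i)) * be k i.
  have Lsum : forall f : I -> R, \sum_i L i * f i =
      \sum_i l' (inl i) * f i +
      \sum_i \sum_k l' (inr (i, k)) * (al i k * f i + be i k * f k).
    move=> f; rewrite /L.
    under eq_bigr => i _ do rewrite !mulrDl.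
    rewrite !big_split /= -addrA; congr (_ + _).
    have E2 : \sum_i (\sum_k l' (inr (k, i)) * be k i) * f i =
        \sum_i \sum_k l' (inr (i, k)) * (be i k * f k).
      under eq_bigr => i _ do rewrite mulr_suml.
      rewrite exchange_big /=; apply: eq_bigr => i _; apply: eq_bigr => k _.
      by rewrite mulrA.
    rewrite E2 -big_split /=; apply: eq_bigr => i _.
    rewrite mulr_suml -big_split /=; apply: eq_bigr => k _.
    by rewrite mulrDr !mulrA.
  have Hpos : forall i k, A' (inr (i, k)) -> 0 < h i - h k.
    by move=> i k /and4P [_ _ hi hk]; lra.
  have hL0 : forall i, 0 <= L i.
    move=> i; rewrite /L; apply: addr_ge0; first apply: addr_ge0.
      + exact: l'0.
      + apply: sumr_ge0 => k _; case: (boolP (A' (inr (i, k)))) => Hik.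
          apply: mulr_ge0 => //; have := Hpos i k Hik.
          move: Hik => /and4P [_ _ hi hk] hp; rewrite /al.
          apply: divr_ge0; lra.
        by rewrite l'A ?mul0r.
      + apply: sumr_ge0 => k _; case: (boolP (A' (inr (k, i)))) => Hik.
          apply: mulr_ge0 => //; have := Hpos k i Hik.
          move: Hik => /and4P [_ _ hi hk] hp; rewrite /be.
          apply: divr_ge0; lra.
        by rewrite l'A ?mul0r.
  have hLA : forall i, ~~ A i -> L i = 0.
    move=> i Ai; rewrite /L l'A ?big1 ?addr0 //=; last by rewrite (negbTE Ai).
      + by move=> k _; rewrite l'A ?mul0r //= (negbTE Ai) andbF.
      + by move=> k _; rewrite l'A ?mul0r //= (negbTE Ai).
  have hL1 : \sum_i L i = 1.
    transitivity (\sum_i L i * (fun _ => 1) i); first by apply: eq_bigr => i _; rewrite mulr1.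
      rewrite Lsum; transitivity (\sum_z l' z); last exact: l'1.
      rewrite big_sumType /=; congr (_ + _).
        by apply: eq_bigr => i _; rewrite mulr1.
      rewrite [RHS](eq_bigr (fun p => l' (inr (p.1, p.2)))); last by case.
      rewrite -(pair_bigA _ (fun i k => l' (inr (i, k)))) /=.
      apply: eq_bigr => i _; apply: eq_bigr => k _.
      case: (boolP (A' (inr (i, k)))) => Hik.
        have := Hpos i k Hik; rewrite /al /be => hp.
        rewrite !mulr1 -mulrDl [X in _ * X](_ : _ = 1) ?mulr1 //.
        field; lra.
      by rewrite l'A ?mul0r.
  have [j0 Hj0] := H L hL0 hLA hL1.
  have : \sum_i L i * q i j0 = 0; last by move/eqP; rewrite (negbTE Hj0).
    rewrite Lsum.
    case: (unliftP ord0 j0) => [j ->|->].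
    + rewrite -[RHS](Hall j) big_sumType /=; congr (_ + _).
      rewrite [RHS](eq_bigr (fun p => l' (inr (p.1, p.2)) * q' (inr (p.1, p.2)) j)); last by case.
      rewrite -(pair_bigA _ (fun i k => l' (inr (i, k)) * q' (inr (i, k)) j)) /=.
      apply: eq_bigr => i _; apply: eq_bigr => k _.
      by rewrite mulrDr !mulrA.
    + rewrite big1 ?add0r.
        apply: big1 => i _; apply: big1 => k _.
        case: (boolP (A' (inr (i, k)))) => Hik.
          have := Hpos i k Hik; rewrite /al /be -/(h i) -/(h k) => hp.
          rewrite [X in _ * X](_ : _ = 0) ?mulr0 //.
          field; lra.
        by rewrite l'A ?mul0r.
      move=> i _; case: (boolP (A' (inl i))) => Hi.
        by move: Hi => /andP [_ /eqP hi]; rewrite -/(h i) hi mulr0.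
      by rewrite l'A ?mul0r.
pose D i := \sum_j u' j * t i j.
have Hfg : forall i k, A i && (0 < h i) -> A k && (h k < 0) -> - D i / h i < D k / (- h k).
  move=> i k /andP [Ai hi] /andP [Ak hk].
  have := Hu' (inr (i, k)); rewrite /= Ai Ak hi hk => /(_ isT).
  rewrite (eq_bigr (fun j => al i k * (u' j * t i j) + be i k * (u' j * t k j))); last first.
    by move=> j _ /=; ring.
  rewrite big_split /= -!mulr_sumr -/(D i) -/(D k) /al /be => H0.
  rewrite ltr_pdivrMr ?oppr_gt0 // mulrAC ltr_pdivlMr ?oppr_gt0 //.
  have hp : 0 < h i - h k by lra.
  have E : - h k / (h i - h k) * D i + h i / (h i - h k) * D k =
      (- h k * D i + h i * D k) / (h i - h k) by field; lra.
  move: H0; rewrite E pmulr_lgt0 ?invr_gt0 // => H0.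
  nra.
have [t0 [Ht1 Ht2]] := sep_interval Hfg.
exists (fun m => if unlift ord0 m is Some j then u' j else t0) => i Ai.
rewrite big_ord_recl unlift_none.
under eq_bigr => j _ do rewrite liftK.
rewrite -/(D i) -/(h i).
case: (ltrgtP (h i) 0) => hi.
- have := Ht2 i; rewrite Ai hi => /(_ isT).
  rewrite ltr_pdivlMr ?oppr_gt0 // => H1; nra.
- have := Ht1 i; rewrite Ai hi => /(_ isT).
  rewrite ltr_pdivrMr // => H1; nra.
- have := Hu' (inl i); rewrite /= Ai hi eqxx => /(_ isT).
  by rewrite mulr0 add0r.
Qed.

End Gordan.

Section Basics.
Variables (R : realType) (d : nat).
Local Notation vec := (vec R d).
Local Notation pset := (pset R d).

Lemma evRC (u x : vec) : evR u x = evR x u.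
Proof. by apply: eq_bigr => i _; rewrite mulrC. Qed.

Lemma evRD (u x y : vec) : evR u (x + y) = evR u x + evR u y.
Proof. by rewrite /evR -big_split /=; apply: eq_bigr => i _; rewrite mxE mulrDr. Qed.

Lemma evRZ (u x : vec) c : evR u (c *: x) = c * evR u x.
Proof. by rewrite /evR mulr_sumr; apply: eq_bigr => i _; rewrite mxE mulrCA. Qed.

Lemma evR0 (u : vec) : evR u 0 = 0.
Proof. by rewrite /evR big1 // => i _; rewrite mxE mulr0. Qed.

Lemma evRN (u x : vec) : evR u (- x) = - evR u x.
Proof. by rewrite -scaleN1r evRZ mulN1r. Qed.

Lemma evRB (u x y : vec) : evR u (x - y) = evR u x - evR u y.
Proof. by rewrite evRD evRN. Qed.

Lemma evR_sum k (l : 'I_k -> R) (p : 'I_k -> vec) u :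
  evR u (\sum_i l i *: p i) = \sum_i l i * evR u (p i).
Proof. by elim/big_rec2: _ => [|i y1 y2 _ <-]; rewrite ?evR0 // evRD evRZ. Qed.

Definition nR (n : 'rV[int]_d) : vec := map_mx (fun z : int => z%:~R) n.

Lemma evE n x : ev n x = evR (nR n) x.
Proof. by apply: eq_bigr => i _; rewrite mxE. Qed.

Lemma conv_ge (S : pset) u c x : conv S x -> (forall y, S y -> c <= evR u y) ->
  c <= evR u x.
Proof.
case=> k [p [l [Sp [l0 [l1 ->]]]]] H; rewrite evR_sum.
have : \sum_i l i * c <= \sum_i l i * evR u (p i).
  by apply: ler_sum => i _; apply: ler_wpM2l => //; apply: H.
by rewrite -mulr_suml l1 mul1r.
Qed.

Lemma conv_eq (S : pset) u c x : conv S x -> (forall y, S y -> evR u y = c) ->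
  evR u x = c.
Proof.
case=> k [p [l [Sp [l0 [l1 ->]]]]] H; rewrite evR_sum.
rewrite (eq_bigr (fun i => l i * c)); last by move=> i _; rewrite H.
by rewrite -mulr_suml l1 mul1r.
Qed.

Lemma conv_ext (S T : pset) x : (forall y, S y -> T y) -> conv S x -> conv T x.
Proof.
move=> ST [k [p [l [Sp [l0 [l1 ->]]]]]].
by exists k, p, l; split=> //; move=> i; apply: ST.
Qed.

Lemma conv_pt (S : pset) x : S x -> conv S x.
Proof.
move=> Sx; exists 1%N, (fun _ => x), (fun _ => 1).
split; first by move=> _.
split; first by move=> _; exact: ler01.
by rewrite !big_ord1 scale1r.
Qed.

Lemma conv_nil x : ~ conv (fun y : vec => y \in [::]) x.
Proof.
case=> [[|k]] [p [l [Sp [l0 [l1 _]]]]].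
  by move: l1; rewrite big_ord0 => /eqP; rewrite eq_sym oner_eq0.
by have := Sp ord0.
Qed.

Lemma sep (S : seq vec) x : ~ conv (fun y => y \in S) x ->
  exists u : vec, forall s, s \in S -> evR u x < evR u s.
Proof.
move=> Hx.
pose q := fun i : 'I_(size S) => fun j => (nth 0 S i) ord0 j - x ord0 j.
have Hg : forall l : 'I_(size S) -> R, (forall i, 0 <= l i) -> (forall i, ~~ predT i -> l i = 0) ->
     \sum_i l i = 1 -> exists j, \sum_i l i * q i j != 0.
  move=> l l0 _ l1.
  case: (pselect (exists j, \sum_i l i * q i j != 0)) => // Hn.
  exfalso; apply: Hx.
  exists (size S), (fun i => S`_i), l; split; first by move=> i; apply: mem_nth.
  split=> //; split=> //.
  apply/rowP => j; rewrite summxE.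
  case: (eqVneq (\sum_i l i * q i j) 0) => Hj; last first.
    by exfalso; apply: Hn; exists j.
  move: Hj; rewrite /q; under eq_bigr => i _ do rewrite mulrBr.
  rewrite sumrB -mulr_suml l1 mul1r => /eqP; rewrite subr_eq0 => /eqP <-.
  by apply: eq_bigr => i _; rewrite !mxE.
have [u Hu] := gordan Hg.
exists (\row_j u j) => s sS.
have sI : (index s S < size S)%N by rewrite index_mem.
have := Hu (Ordinal sI) isT; rewrite /q /= nth_index //.
move=> H; rewrite -subr_gt0 /evR -sumrB.
suff -> : \sum_i ((\row_j u j) ord0 i * s ord0 i - (\row_j u j) ord0 i * x ord0 i)
   = \sum_j u j * (s ord0 j - x ord0 j) by [].
by apply: eq_bigr => j _; rewrite !mxE mulrBr.
Qed.

End Basics.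

Section Fin.
Variables (R : realType) (d : nat).
Local Notation vec := (vec R d).
Local Notation pset := (pset R d).

Lemma fin_lattice (Q : pset) (c : R) :
  (forall x, Q x -> forall i, `|x ord0 i| <= c) ->
  exists V : seq vec, forall v, v \in V <-> (lattice_pt v /\ Q v).
Proof.
move=> H.
pose M := Num.Def.archi_bound `|c|.
have cM : c < M%:R.
  by apply: le_lt_trans (archi_boundP (normr_ge0 c)); apply: ler_norm.
pose box := [seq (\row_i (((nat_of_ord (f i))%:R : R) - M%:R) : vec)
            | f : {ffun 'I_d -> 'I_(M + M).+1} <- enum {ffun 'I_d -> 'I_(M + M).+1}].
exists [seq v <- box | `[< lattice_pt v /\ Q v >]].
move=> v; rewrite mem_filter; split.
  by case/andP => /asboolP.
move=> [Lv Qv]; apply/andP; split; first by apply/asboolP.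
pose z i := Num.floor (v ord0 i).
have zE : forall i, (z i)%:~R = v ord0 i by move=> i; rewrite /z floorK //; apply: Lv.
have zb : forall i, (- (M%:Z) < z i < M%:Z)%R.
  move=> i; have := H v Qv i; rewrite -zE -(ltr_int R) -(ltr_int R) => hv.
  have : `|(z i)%:~R| < (M%:Z)%:~R :> R by apply: le_lt_trans hv cM.
  by rewrite ltr_norml mulrNz.
pose f := [ffun i => (inord (absz (z i + M%:Z)) : 'I_(M + M).+1)].
apply/mapP; exists f; first by rewrite mem_enum.
apply/rowP => i; rewrite !mxE ffunE.
have hz := zb i; have h0 : (0 <= z i + M%:Z)%R by lia.
rewrite inordK; last first.
  rewrite ltnS.
  lia.
rewrite -[((absz _)%:R)]/(((absz (z i + M%:Z))%:Z)%:~R) gez0_abs //.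
by rewrite intrD zE -[(M%:Z)%:~R]/(M%:R : R) addrK.
Qed.

End Fin.

Section More.
Variables (R : realType) (d : nat).
Local Notation vec := (vec R d).
Local Notation pset := (pset R d).

Definition ei (i : 'I_d) : vec := \row_j (j == i)%:R.

Lemma evR_ei (x : vec) i : evR x (ei i) = x ord0 i.
Proof.
rewrite /evR (bigD1 i) //= big1 ?addr0; first by rewrite mxE eqxx mulr1.
by move=> j /negbTE ji; rewrite mxE ji mulr0.
Qed.

Lemma evR_eil (x : vec) i : evR (ei i) x = x ord0 i.
Proof. by rewrite evRC evR_ei. Qed.

Lemma evRNl (u x : vec) : evR (- u) x = - evR u x.
Proof. by rewrite evRC evRN evRC. Qed.

Lemma conv_bound (V : seq vec) c x : (forall v, v \in V -> forall i, `|v ord0 i| <= c) ->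
  conv (fun y => y \in V) x -> forall i, `|x ord0 i| <= c.
Proof.
move=> HV Hx i; rewrite ler_norml; apply/andP; split.
  rewrite -evR_eil; apply: (conv_ge Hx) => y /HV /(_ i).
  by rewrite evR_eil ler_norml => /andP [].
rewrite -lerN2 -evR_eil -evRNl; apply: (conv_ge Hx) => y /HV /(_ i).
by rewrite evRNl evR_eil ler_norml => /andP [h1 h2]; lra.
Qed.

Lemma vec_bound (v : vec) : exists c, forall i, `|v ord0 i| <= c.
Proof.
exists (\sum_i `|v ord0 i|) => i.
by rewrite (bigD1 i) //= lerDl sumr_ge0.
Qed.

Lemma seq_bound (V : seq vec) : exists c, forall v, v \in V -> forall i, `|v ord0 i| <= c.
Proof.
elim: V => [|v V [c Hc]]; first by exists 0.
have [c' Hc'] := vec_bound v.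
exists (Num.max c c') => w; rewrite inE => /orP [/eqP -> | /Hc H] i.
  by rewrite le_max Hc' orbT.
by rewrite le_max H.
Qed.

Lemma argmin (s : seq vec) (f : vec -> R) : s != [::] ->
  exists2 b, b \in s & forall y, y \in s -> f b <= f y.
Proof.
elim: s => [//|x s IH] _.
case: (eqVneq s [::]) => [->|sn].
  by exists x => [|y]; rewrite ?inE ?eqxx // => /eqP ->.
have [b bs Hb] := IH sn.
case: (lerP (f x) (f b)) => h.
  exists x; first by rewrite inE eqxx.
  move=> y; rewrite inE => /orP [/eqP -> // | /Hb]; exact: le_trans.
exists b; first by rewrite inE bs orbT.
move=> y; rewrite inE => /orP [/eqP -> | /Hb //]; exact: ltW.
Qed.

Lemma sgM_norm (x : R) : Num.sg x * x = `|x|.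
Proof.
case: (ltrgtP x 0) => h.
- by rewrite ltr0_sg // ltr0_norm // mulN1r.
- by rewrite gtr0_sg // gtr0_norm // mul1r.
- by rewrite h sgr0 normr0 mul0r.
Qed.

Lemma prim_nz (n : 'rV[int]_d) : primitive n -> exists j, n ord0 j != 0.
Proof.
move=> Hp; case: (pselect (exists j, n ord0 j != 0)) => // Hn; exfalso.
move: Hp; rewrite /primitive big1 // => i _.
case: (eqVneq (n ord0 i) 0) => [->//|h]; exfalso; apply: Hn; by exists i.
Qed.

Lemma ev_ei (n : 'rV[int]_d) i : ev n (ei i) = (n ord0 i)%:~R.
Proof. by rewrite evE evR_ei mxE. Qed.

Lemma ev_lin n (x y : vec) a b : ev n (a *: x + b *: y) = a * ev n x + b * ev n y.
Proof. by rewrite !evE evRD !evRZ. Qed.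

Lemma interior_gt (T : pset) (n : 'rV[int]_d) c x : primitive n ->
  (forall y, T y -> c <= ev n y) -> interior_pt T x -> c < ev n x.
Proof.
move=> /prim_nz [j nj] HT [e e0 He].
pose y := x - (e / 2 * Num.sg ((n ord0 j)%:~R : R)) *: ei j.
have Ty : T y.
  apply: He => k; rewrite /y !mxE.
  have -> : x ord0 k - (e / 2 * Num.sg ((n ord0 j)%:~R : R)) * (k == j)%:R - x ord0 k
     = - ((e / 2 * Num.sg ((n ord0 j)%:~R : R)) * (k == j)%:R) by ring.
  rewrite normrN normrM normrM normr_sg.
  have h3 : `|e / 2| = e / 2 by rewrite ger0_norm //; lra.
  rewrite h3.
  case: (_ != 0); case: (k == j); rewrite /= ?normr1 ?normr0 ?mulr1 ?mulr0; lra.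
have := HT y Ty; rewrite /y -[x]scale1r -scaleNr ev_lin ev_ei.
rewrite mul1r scale1r mulNr -(mulrA (e / 2)) sgM_norm.
have : 0 < `|((n ord0 j)%:~R : R)| by rewrite normr_gt0 intr_eq0.
move=> h h'; nra.
Qed.
Lemma ev_int (n : 'rV[int]_d) (x : vec) : lattice_pt x -> ev n x \is a Num.int.
Proof. by move=> Lx; apply: rpred_sum => i _; apply: rpredM; [apply: (intr_int R) | apply: Lx]. Qed.

Lemma int_step (x y : R) : x \is a Num.int -> y \is a Num.int -> y < x -> y + 1 <= x.
Proof.
move=> /floorK <- /floorK <-; rewrite ltr_int -[1]/(1%:~R) -intrD ler_int.
by move=> h; lia.
Qed.

End More.

Section Facets.
Variables (R : realType) (d : nat) (P : pset R d) (V : seq (vec R d)).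
Local Notation vec := (vec R d).
Local Notation nR := (@nR R d).
Hypothesis HV : forall x, P x <-> conv (fun y => y \in V) x.
Hypothesis HF : full_dim P.

Lemma evRZl (u x : vec) c : evR (c *: u) x = c * evR u x.
Proof. by rewrite evRC evRZ evRC. Qed.

Lemma facet_on n h : is_facet P n h -> forall y, P y -> ev n y = - h%:~R ->
  conv (fun v => v \in V /\ ev n v = - h%:~R) y.
Proof.
move=> [_ [Hh _]] y /HV [k [p [l [Vp [l0 [l1 yE]]]]]] Hy.
have Pp : forall i, P (p i) by move=> i; apply/HV/conv_pt/Vp.
have S0 : \sum_i l i * (ev n (p i) + h%:~R) = 0.
  under eq_bigr => i _ do rewrite mulrDr.
  rewrite big_split /= -mulr_suml l1 mul1r.
  have E : ev n y = \sum_i l i * ev n (p i).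
    by rewrite yE evE evR_sum; apply: eq_bigr => i _; rewrite evE.
  by rewrite -E Hy addNr.
have T0 : forall i, l i * (ev n (p i) + h%:~R) = 0.
  move=> i; apply: (psumr_eq0P _ S0) => // j _.
  by apply: mulr_ge0 => //; have hj := Hh _ (Pp j); lra.
have [j0 lj0] : exists j0, l j0 != 0.
  case: (pselect (exists j0, l j0 != 0)) => // Hn; exfalso.
  move: l1; rewrite big1 => [/eqP|i _]; first by rewrite eq_sym oner_eq0.
  by case: (eqVneq (l i) 0) => // hi; exfalso; apply: Hn; exists i.
have On : forall i, l i != 0 -> ev n (p i) = - h%:~R.
  move=> i li; have := T0 i; move/eqP; rewrite mulf_eq0 (negbTE li) /= => /eqP hi.
  lra.
exists k, (fun i => if l i == 0 then p j0 else p i), l.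
split.
  move=> i; case: eqP => [_|/eqP li]; split; by [apply: Vp | apply: On].
split=> //; split=> //.
rewrite yE; apply: eq_bigr => i _; case: eqP => [->|//].
by rewrite !scale0r.
Qed.

Lemma mulmx_tr_row (u : vec) m (M : 'M[R]_(m, d)) j :
  (u *m M^T) ord0 j = evR u (row j M).
Proof. by rewrite !mxE; apply: eq_bigr => k _; rewrite !mxE. Qed.

Lemma facet_same n h n' h' : is_facet P n h -> is_facet P n' h' ->
  (forall v, v \in V -> (ev n v = - h%:~R <-> ev n' v = - h'%:~R)) -> n' = n /\ h' = h.
Proof.
move=> Fn Fn' Hsame.
have Fn_ := Fn.
case: Fn => [pn [Hh [x0 [M [Px0 [ex0 [rM HM]]]]]]].
case: Fn' => [pn' [Hh' _]].
have on' : forall y, P y -> ev n y = - h%:~R -> ev n' y = - h'%:~R.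
  move=> y Py ey; have cy := facet_on Fn_ Py ey.
  rewrite evE; apply: (conv_eq cy) => v [vV ev_]; rewrite -evE; exact/(Hsame v vV).
have [j0 nj0] := prim_nz pn.
have [j0' nj0'] := prim_nz pn'.
have d0 : (0 < d)%N := leq_ltn_trans (leq0n _) (ltn_ord j0).
have rowz : forall (m : 'rV[int]_d) hh,
    (forall y, P y -> ev n y = - h%:~R -> ev m y = - hh%:~R) -> nR m *m M^T = 0.
  move=> m hh Hm; apply/rowP => j; rewrite mulmx_tr_row mxE.
  have [P1 e1] := HM j.
  have := Hm _ P1 e1; have := Hm _ Px0 ex0.
  rewrite !evE evRD => e0 e2; rewrite e0 in e2; lra.
have Kn : (nR n <= kermx M^T)%MS by apply/sub_kermxP; apply: (rowz n h).
have Kn' : (nR n' <= kermx M^T)%MS by apply/sub_kermxP; apply: (rowz n' h' on').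
have nRn0 : nR n != 0.
  apply/eqP => /rowP /(_ j0); rewrite !mxE => /eqP; rewrite intr_eq0 (negbTE nj0).
  by [].
have rK : \rank (kermx (M^T)) = 1%N by rewrite mxrank_ker mxrank_tr rM; lia.
have KsubN : (kermx M^T <= nR n)%MS.
  by rewrite -(mxrank_leqif_sup Kn).2 rK rank_rV nRn0.
have [c hc] : exists c, nR n' = c *: nR n by apply/sub_rVP; apply: submx_trans Kn' KsubN.
have evc : forall y, ev n' y = c * ev n y by move=> y; rewrite !evE hc evRZl.
have hh : - h'%:~R = c * - h%:~R by rewrite -(on' _ Px0 ex0) evc ex0.
have cpos : 0 < c.
  case: (ltrP 0 c) => // c0; exfalso.
  case: (eqVneq c 0) => [c00|cn0].
    have : nR n' = 0 by rewrite hc c00 scale0r.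
    move/rowP/(_ j0'); rewrite !mxE => /eqP; rewrite intr_eq0 (negbTE nj0').
    by [].
  have cneg : c < 0 by rewrite lt_neqAle cn0 c0.
  have allH : forall z, P z -> ev n z = - h%:~R.
    move=> z Pz; have h1 := Hh z Pz; have h2 := Hh' z Pz.
    rewrite evc hh in h2.
    apply/eqP; rewrite eq_le; apply/andP; split; nra.
  case: HF => [x1 [M1 [Px1 [rM1 HM1]]]].
  have : nR n *m M1^T = 0.
    apply/rowP => j; rewrite mulmx_tr_row mxE.
    have := allH _ (HM1 j); have := allH _ Px1; rewrite !evE evRD => e0 e2.
    rewrite e0 in e2; lra.
  have uM : M1^T \in unitmx by rewrite -row_free_unit /row_free mxrank_tr rM1.
  move=> /(congr1 (mulmx^~ (invmx M1^T))); rewrite /= mulmxK // mul0mx => /eqP.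
  by rewrite (negbTE nRn0).
have ent : forall i, (n' ord0 i)%:~R = c * (n ord0 i)%:~R :> R.
  by move=> i; have := congr1 (fun u : 'rV[R]_d => u ord0 i) hc; rewrite /= !mxE.
have c1 : c = 1.
  have Hij : forall i, (`|n' ord0 i| * `|n ord0 j0|)%N = (`|n' ord0 j0| * `|n ord0 i|)%N.
    move=> i; rewrite -!abszM; congr absz; apply: (@intr_inj R).
    by rewrite !intrM !ent; ring.
  have G1 : \big[gcdn/0%N]_i (absz (n ord0 i)) = 1%N by apply/eqP.
  have G1' : \big[gcdn/0%N]_i (absz (n' ord0 i)) = 1%N by apply/eqP.
  have m1 : ((\big[gcdn/0%N]_i (absz (n' ord0 i))) * (absz (n ord0 j0)))%N =
            \big[gcdn/0%N]_i ((absz (n' ord0 i)) * (absz (n ord0 j0)))%N.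
    apply: (big_morph (fun x => x * (absz (n ord0 j0)))%N); last by rewrite mul0n.
    by move=> x y; rewrite muln_gcdl.
  have m2 : ((absz (n' ord0 j0)) * (\big[gcdn/0%N]_i (absz (n ord0 i))))%N =
            \big[gcdn/0%N]_i ((absz (n' ord0 j0)) * (absz (n ord0 i)))%N.
    apply: (big_morph (fun x => (absz (n' ord0 j0)) * x)%N); last by rewrite muln0.
    by move=> x y; rewrite muln_gcdr.
  have E : (absz (n ord0 j0)) = (absz (n' ord0 j0)).
    move: m1; rewrite G1' mul1n (eq_bigr _ (fun i _ => Hij i)) -m2 G1 muln1.
    by [].
  have e2 : `|(n' ord0 j0)%:~R : R| = c * `|(n ord0 j0)%:~R : R|.
    by rewrite ent normrM gtr0_norm.
  move: e2; rewrite -!intr_norm -!natr_absz -E => e2.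
  have hnz : (`|n ord0 j0|%N%:R : R) != 0 by rewrite pnatr_eq0 absz_eq0.
  by apply: (mulIf hnz); rewrite mul1r [RHS]e2.
split.
  apply/rowP => i; apply: (@intr_inj R); by rewrite ent c1 mul1r.
apply: (@intr_inj R); apply: oppr_inj; by rewrite hh c1 mul1r.
Qed.

Lemma facet_bound : exists K : R, forall n h, is_facet P n h ->
  forall i, `|(n ord0 i)%:~R : R| <= K.
Proof.
pose ex (S : {set 'I_(size V)}) := exists n, exists h, is_facet P n h /\
   forall k : 'I_(size V), (k \in S) = (ev n V`_k == - h%:~R).
pose g (S : {set 'I_(size V)}) : R := match pselect (ex S) with
  | left E => \sum_i `|((projT1 (cid E)) ord0 i)%:~R : R|
  | right _ => 0 end.
have g0 : forall S, 0 <= g S.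
  by move=> S; rewrite /g; case: pselect => // E; apply: sumr_ge0.
exists (\sum_S g S) => n h Fn i.
pose S0 := [set k : 'I_(size V) | ev n V`_k == - h%:~R].
have E0 : ex S0 by exists n, h; split => // k; rewrite inE.
have gS0 : g S0 = \sum_i `|(n ord0 i)%:~R : R|.
  rewrite /g; case: pselect => [E|]; last by [].
  case: (cid E) => n'' [h'' [F'' M'']] /=.
  have Hs : forall v, v \in V -> (ev n v = - h%:~R <-> ev n'' v = - h''%:~R).
    move=> v vV.
    have vi : (index v V < size V)%N by rewrite index_mem.
    have := M'' (Ordinal vi); rewrite inE /= nth_index // => e.
    by split => /eqP H; apply/eqP; [rewrite -e | rewrite e].
  by have [-> _] := facet_same Fn F'' Hs.
apply: le_trans (_ : \sum_i `|(n ord0 i)%:~R : R| <= _).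
  by rewrite (bigD1 i) //= lerDl sumr_ge0.
by rewrite -gS0 (bigD1 S0) //= lerDl sumr_ge0.
Qed.

End Facets.

Section Main.
Variables (R : realType) (d : nat) (P : pset R d) (a : nat).
Local Notation vec := (vec R d).
Local Notation pset := (pset R d).
Local Notation nR := (@nR R d).
Local Notation ei := (@ei R d).
Hypothesis HL : lattice_polytope P.
Hypothesis Hpres : forall x, P x <-> forall n h, is_facet P n h -> ev n x >= - h%:~R.
Hypothesis Hcod : is_codegree P a.
Hypothesis Hsum : forall x, P x <-> msum (lfloor (dil a%:R P)) (remainder P a) x.

Definition Q1 : pset := fun x => forall n h, is_facet P n h -> ev n x >= 1 - a%:~R * h%:~R.
Definition Q2 : pset := fun x => forall n h, is_facet P n h -> ev n x >= (a%:~R - 1) * h%:~R - 1.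
Definition SA : pset := fun x => lattice_pt x /\ interior_pt (dil a%:R P) x.
Definition SB : pset := fun x => lattice_pt x /\ Q2 x.

Lemma a_ge0 : 0 <= a%:~R :> R.
Proof. by rewrite ler0z. Qed.

Lemma P_bound : exists c, forall x, P x -> forall i, `|x ord0 i| <= c.
Proof.
case: HL => V [_ [_ HV]]; have [c Hc] := seq_bound V.
by exists c => x /HV; apply: conv_bound.
Qed.

Lemma SA_Q1 x : SA x -> Q1 x.
Proof.
move=> [Lx Ix] n h Fn.
have Fn' := Fn; case: Fn' => [pn [Hh _]].
have H1 : - (a%:~R * h%:~R) < ev n x.
  apply: (interior_gt pn _ Ix) => y [z [Pz ->]].
  rewrite evE evRZ -evE; have := Hh z Pz => hz.
  rewrite -[a%:R]/(a%:~R : R) -mulrN; apply: ler_wpM2l => //; exact: a_ge0.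
have := int_step (ev_int n Lx) _ H1.
have -> : - (a%:~R * h%:~R) = ((- (a%:Z * h))%:~R : R) by rewrite intrN intrM.
move=> /(_ (intr_int _ _)); rewrite intrN intrM => H2; lra.
Qed.

Lemma conv_Q1 x : conv SA x -> Q1 x.
Proof.
move=> cx n h Fn; rewrite evE; apply: (conv_ge cx) => y /SA_Q1 /(_ n h Fn).
by rewrite evE.
Qed.

Lemma conv_Q2 x : conv SB x -> Q2 x.
Proof.
move=> cx n h Fn; rewrite evE; apply: (conv_ge cx) => y [_ /(_ n h Fn)].
by rewrite evE.
Qed.

Lemma Q12 x y : Q1 x -> Q2 y -> P (x + y).
Proof.
move=> Qx Qy; apply/Hpres => n h Fn.
have := Qx n h Fn; have := Qy n h Fn; rewrite !evE evRD => h1 h2.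
set A := (a%:~R : R) in h1 h2; set H := (h%:~R : R) in h1 h2 *.
have : - H = (1 - A * H) + ((A - 1) * H - 1) by ring.
move=> ->; lra.
Qed.

Lemma VA_ex : exists VA : seq vec, VA != [::] /\ forall v, v \in VA <-> SA v.
Proof.
have [c Hc] := P_bound.
have Hb : forall x, SA x -> forall i, `|x ord0 i| <= a%:R * c.
  move=> x [_ [e e0 He]] i.
  have [z [Pz ->]] : dil a%:R P x by apply: He => j; rewrite subrr normr0.
  rewrite mxE normrM ger0_norm ?ler0n //; apply: ler_wpM2l => //; exact: Hc.
have [VA HVA] := fin_lattice Hb.
exists VA; split; last first.
  by move=> v; split => [/HVA [] //| Sv]; apply/HVA; split => //; case: Sv.
case: Hcod => _ [[x0 [L0 I0]] _].
have : x0 \in VA by apply/HVA; do 2 split => //.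
by case: VA {HVA}.
Qed.

Lemma VB_ex : exists VB : seq vec, VB != [::] /\ forall v, v \in VB <-> SB v.
Proof.
have [c Hc] := P_bound.
case: Hcod => _ [[a0 [L0 I0]] _].
have Qa0 : Q1 a0 by apply: SA_Q1.
have [ca Hca] := vec_bound a0.
have Hb : forall x, SB x -> forall i, `|x ord0 i| <= c + ca.
  move=> x [_ Qx] i; have := Hc _ (Q12 Qa0 Qx) i; have := Hca i.
  rewrite mxE !ler_norml => /andP [h1 h2] /andP [h3 h4].
  apply/andP; split; lra.
have [VB HVB] := fin_lattice Hb.
exists VB; split; last first.
  by move=> v; split => [/HVB [] //| Sv]; apply/HVB; split => //; case: Sv.
case: HL => V [Vn [_ HV]].
case: V Vn HV => [//|v V] _ HV.
have : P v by apply/HV/conv_pt; rewrite inE eqxx.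
move/Hsum => [y [z [_ [Bz _]]]].
have : conv (fun w => w \in VB) z by apply: (conv_ext _ Bz) => w Sw; apply/HVB; split => //; case: Sw.
by case: VB {HVB} => // /conv_nil.
Qed.

Lemma Q1_A x : Q1 x -> lfloor (dil a%:R P) x.
Proof.
move=> Qx.
have [VA [VAn HVA]] := VA_ex; have [VB [VBn HVB]] := VB_ex.
apply: (conv_ext (S := fun y => y \in VA)); first by move=> y /HVA.
case: (pselect (conv (fun y => y \in VA) x)) => // Hn; exfalso.
have [u Hu] := sep Hn.
have [b bB Hb] := argmin (fun y => evR u y) VBn.
have [s sA Hs] := argmin (fun y => evR u y) VAn.
have : P (x + b) by apply: Q12 => //; have [_ ] := (HVB b).1 bB.
move/Hsum => [y [z [Ay [Bz E]]]].
have h1 : evR u s <= evR u y.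
  apply: (conv_ge (S := fun w => w \in VA)); last exact: Hs.
  by apply: (conv_ext _ Ay) => w Sw; apply/HVA.
have h2 : evR u b <= evR u z.
  apply: (conv_ge (S := fun w => w \in VB)); last exact: Hb.
  by apply: (conv_ext _ Bz) => w Sw; apply/HVB.
have h3 := Hu s sA.
have h4 : evR u (x + b) = evR u (y + z) by rewrite E.
rewrite !evRD in h4.
by have := ltr_leD (lt_le_trans h3 h1) h2; rewrite h4 ltxx.
Qed.

Lemma Q2_B x : Q2 x -> remainder P a x.
Proof.
move=> Qx.
have [VA [VAn HVA]] := VA_ex; have [VB [VBn HVB]] := VB_ex.
apply: (conv_ext (S := fun y => y \in VB)); first by move=> y /HVB.
case: (pselect (conv (fun y => y \in VB) x)) => // Hn; exfalso.
have [u Hu] := sep Hn.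
have [b bB Hb] := argmin (fun y => evR u y) VBn.
have [s sA Hs] := argmin (fun y => evR u y) VAn.
have : P (s + x) by apply: Q12 => //; apply: SA_Q1; apply/HVA.
move/Hsum => [y [z [Ay [Bz E]]]].
have h1 : evR u s <= evR u y.
  apply: (conv_ge (S := fun w => w \in VA)); last exact: Hs.
  by apply: (conv_ext _ Ay) => w Sw; apply/HVA.
have h2 : evR u b <= evR u z.
  apply: (conv_ge (S := fun w => w \in VB)); last exact: Hb.
  by apply: (conv_ext _ Bz) => w Sw; apply/HVB.
have h3 := Hu b bB.
have h4 : evR u (s + x) = evR u (y + z) by rewrite E.
rewrite !evRD in h4.
by have := ler_ltD h1 (lt_le_trans h3 h2); rewrite h4 ltxx.
Qed.

Lemma part1 x : lfloor (dil a%:R P) x <-> Q1 x.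
Proof. by split; [apply: conv_Q1 | apply: Q1_A]. Qed.

Lemma part2 x : remainder P a x <-> Q2 x.
Proof. by split; [apply: conv_Q2 | apply: Q2_B]. Qed.

Lemma part3 : lattice_polytope Q1.
Proof.
have [VA [VAn HVA]] := VA_ex.
exists VA; split=> //; split; first by move=> v /HVA [].
move=> x; split.
  by move/Q1_A; apply: conv_ext => y /HVA.
by move=> cx; apply: conv_Q1; apply: (conv_ext _ cx) => y /HVA.
Qed.

Lemma part4 : lattice_polytope Q2.
Proof.
have [VB [VBn HVB]] := VB_ex.
exists VB; split=> //; split; first by move=> v /HVB [].
move=> x; split.
  by move/Q2_B; apply: conv_ext => y /HVB.
by move=> cx; apply: conv_Q2; apply: (conv_ext _ cx) => y /HVB.
Qed.

Lemma scale_exists (m c : R) : c < m -> m <= 0 ->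
  exists t, 0 < t /\ -1 <= t * m /\ t * c < -1.
Proof.
move=> cm m0; case: (ltrP m 0) => hm.
  exists (- m)^-1; split; first by rewrite invr_gt0 oppr_gt0.
  have mn : m != 0 by rewrite lt_eqF.
  split; first by rewrite invrN mulNr mulVf // lexx.
  by rewrite mulrC -[_ * _^-1]/(c / - m) ltr_pdivrMr ?oppr_gt0 // mulN1r opprK.
have m00 : m = 0 by apply/eqP; rewrite eq_le m0 hm.
have c0 : c < 0 by rewrite -m00.
exists (2 / - c); split; first by rewrite divr_gt0 // oppr_gt0.
rewrite m00 mulr0; split; first by rewrite lerN10.
have -> : 2 / - c * c = - 2 by field; rewrite lt_eqF.
lra.
Qed.

Lemma part5 (HF : full_dim P) : a = 1%N -> reflexive_polytope (remainder P a).
Proof.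
move=> a1.
have Q2E : forall x, Q2 x <-> forall n h, is_facet P n h -> -1 <= ev n x.
  have e1 : forall h : int, ((a%:~R : R) - 1) * h%:~R - 1 = -1.
    by move=> h; rewrite a1 mulr1z subrr mul0r sub0r.
  by move=> x; split => H n h Fn; have := H n h Fn; rewrite e1.
split.
  case: part4 => V [Vn [VL HV]]; exists V; split => //; split => // x.
  by split => [/part2 /HV // | /HV /part2].
have [V [_ [_ HV]]] := HL.
have [K HK] := facet_bound HV HF.
pose del : R := 1 / (d%:R * `|K| + 1).
have del0 : 0 < del by rewrite /del divr_gt0 // ltr_wpDl // mulr_ge0.
have small : forall x : vec, (forall i, `|x ord0 i| <= del) -> remainder P a x.
  move=> x Hx; apply/part2/Q2E => n h Fn.
  have : `|ev n x| <= 1.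
    apply: le_trans (ler_norm_sum _ _ _) _.
    apply: le_trans (_ : \sum_(i < d) `|K| * del <= 1).
      apply: ler_sum => i _; rewrite normrM; apply: ler_pM => //.
      exact: le_trans (HK n h Fn i) (ler_norm K).
    rewrite sumr_const card_ord -mulr_natr /del.
    have D0 : 0 < d%:R * `|K| + 1 :> R by rewrite ltr_wpDl // mulr_ge0.
    have -> : `|K| * (1 / (d%:R * `|K| + 1)) * d%:R = (d%:R * `|K|) / (d%:R * `|K| + 1).
      by field; rewrite gt_eqF.
    by rewrite ler_pdivrMr // mul1r lerDl.
  by rewrite ler_norml => /andP [].
have dualb : forall u, dual (remainder P a) u -> forall i, `|u ord0 i| <= 1 / del.
  move=> u Du i.
  pose x : vec := - (del * Num.sg (u ord0 i)) *: ei i.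
  have Bx : remainder P a x.
    apply: small => k; rewrite /x !mxE normrM normrN normrM normr_sg.
    rewrite (ger0_norm (ltW del0)).
    by case: (_ != 0); case: (k == i); rewrite /= ?normr1 ?normr0 ?mulr1 ?mulr0 // ltW.
  have := Du x Bx; rewrite evRZ evR_ei mulNr -mulrA sgM_norm => h1.
  by rewrite ler_pdivlMr // mulrC; lra.
have [VD HVD] := fin_lattice dualb.
have D0 : (0 : vec) \in VD.
  apply/HVD; split; first by move=> i; rewrite mxE rpred0.
  by move=> x _; rewrite evRC evR0 lerN10.
exists VD; split; first by case: VD HVD D0.
split; first by move=> v /HVD [].
move=> u; split => [Du | cu]; last first.
  move=> x Bx; rewrite evRC; apply: (conv_ge cu) => v /HVD [_ Dv].
  by rewrite evRC; apply: Dv.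
case: (pselect (conv (fun y => y \in VD) u)) => // Hn; exfalso.
have [x Hx] := sep Hn.
have VDn : VD != [::] by apply/eqP => e; move: D0; rewrite e.
have [w wD Hw] := argmin (fun y => evR x y) VDn.
have m0 : evR x w <= 0 by have := Hw _ D0; rewrite evR0.
have cm : evR x u < evR x w := Hx w wD.
have [t [t0 [tm tc]]] := scale_exists cm m0.
have By : remainder P a (t *: x).
  apply/part2/Q2E => n h Fn.
  have nD : nR n \in VD.
    apply/HVD; split; first by move=> i; rewrite mxE intr_int.
    move=> z /part2 /Q2E /(_ n h Fn); by rewrite evE.
  have := Hw _ nD => h1; rewrite [evR x (nR n)]evRC -evE in h1.
  rewrite evE evRZ -evE; apply: le_trans tm _; apply: ler_wpM2l => //; exact: ltW.
have := Du _ By; rewrite evRZ evRC => h2.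
by have := lt_le_trans tc h2; rewrite ltxx.
Qed.

End Main.


Theorem theorem3p12 (R : realType) (d : nat) (P : pset R d) (a : nat) :
  lattice_polytope P -> full_dim P ->
  (* facet presentation *)
  (forall x, P x <-> forall n h, is_facet P n h -> ev n x >= - h%:~R) ->
  is_codegree P a ->
  (forall x, P x <-> msum (lfloor (dil a%:R P)) (remainder P a) x) ->
  (forall x, lfloor (dil a%:R P) x <->
     forall n h, is_facet P n h -> ev n x >= 1 - a%:~R * h%:~R) /\
  (forall x, remainder P a x <->
     forall n h, is_facet P n h -> ev n x >= (a%:~R - 1) * h%:~R - 1) /\
  lattice_polytope (fun x : vec R d => forall n h, is_facet P n h ->
                                ev n x >= 1 - a%:~R * h%:~R) /\
  lattice_polytope (fun x : vec R d => forall n h, is_facet P n h ->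
                                ev n x >= (a%:~R - 1) * h%:~R - 1) /\
  (a = 1%N -> reflexive_polytope (remainder P a)).
Proof.
move=> HL HF Hpres Hcod Hsum.
split; first by move=> x; apply: part1.
split; first by move=> x; apply: part2.
split; first by apply: part3.
split; first by apply: part4.
by apply: part5.
Qed.
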